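(* Let $n\ge1$ and $0\le k_1<k_2\le n$ be integers. Let $C_1\subseteq\mathbb{F}_4^n$ be a self-orthogonal additive code with $|C_1|=2^{n-k_1}$, and suppose every nonzero vector of $C_1^\perp$ has weight at least $d_1$. Let $d\ge1$ be an integer with \[ \sum_{i=1}^{d-1}3^i\binom{n}{i}<\frac{2^{n-k_1}-1}{2^{k_2-k_1}-1}. \] Then there exists a self-orthogonal additive code $C_2\subseteq C_1$ with $|C_2|=2^{n-k_2}$ such that every nonzero vector of $C_2^\perp$ has weight at least $\min\{d,d_1\}$.
   Context: $\mathbb{F}_4=\{0,1,\omega,\omega^2\}$, $\omega^2=\omega+1$, $\bar x=x^2$; trace inner product $\langle u,v\rangle=\sum_i(u_i\bar v_i+\bar u_iv_i)\in\mathbb{F}_2$ on $\mathbb{F}_4^n$; additive codes are $\mathbb{F}_2$-subspaces of $\mathbb{F}_4^n$; $C^\perp$ is the trace dual; self-orthogonal means $C\subseteq C^\perp$; weight = number of nonzero coordinates. *)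

(* Defs.v *)
From HB Require Import structures.
From mathcomp Require Import all_boot all_order all_algebra.
Set Implicit Arguments. Unset Strict Implicit. Unset Printing Implicit Defensive.

(* F4 = {0, 1, w, w^2} with w^2 = w + 1 *)
Inductive F4 := F0 | F1 | Fw | Fw2.

Definition F4_to_ord (x : F4) : 'I_4 :=
  match x with F0 => inord 0 | F1 => inord 1 | Fw => inord 2 | Fw2 => inord 3 end.
Definition F4_of_ord (i : 'I_4) : F4 :=
  match val i with 0 => F0 | 1 => F1 | 2 => Fw | _ => Fw2 end.
Lemma F4_ordK : cancel F4_to_ord F4_of_ord.
Proof. by case; rewrite /F4_of_ord /= inordK. Qed.

HB.instance Definition _ := Equality.copy F4 (can_type F4_ordK).
HB.instance Definition _ := Choice.copy F4 (can_type F4_ordK).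
HB.instance Definition _ := Countable.copy F4 (can_type F4_ordK).
HB.instance Definition _ := Finite.copy F4 (can_type F4_ordK).

Definition F4add (x y : F4) : F4 :=
  match x, y with
  | F0, z | z, F0 => z
  | F1, F1 | Fw, Fw | Fw2, Fw2 => F0
  | F1, Fw | Fw, F1 => Fw2
  | F1, Fw2 | Fw2, F1 => Fw
  | Fw, Fw2 | Fw2, Fw => F1
  end.

Definition F4mul (x y : F4) : F4 :=
  match x, y with
  | F0, _ | _, F0 => F0
  | F1, z | z, F1 => z
  | Fw, Fw => Fw2
  | Fw, Fw2 | Fw2, Fw => F1
  | Fw2, Fw2 => Fw
  end.

Definition F4conj (x : F4) : F4 := F4mul x x.

Definition vec (n : nat) := {ffun 'I_n -> F4}.

Definition vadd n (u v : vec n) : vec n := [ffun i => F4add (u i) (v i)].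
Definition vzero n : vec n := [ffun _ => F0].

(* trace inner product  sum_i (u_i conj(v_i) + conj(u_i) v_i), valued in F2 = {0,1} *)
Definition tip n (u v : vec n) : F4 :=
  foldr F4add F0
    [seq F4add (F4mul (u i) (F4conj (v i))) (F4mul (F4conj (u i)) (v i)) | i <- enum 'I_n].

Definition wt n (v : vec n) : nat := #|[set i | v i != F0]|.

(* additive code = F2-subspace of F4^n (closed under 0 and +, as char = 2) *)
Definition additive_code n (C : {set vec n}) : Prop :=
  vzero n \in C /\ forall u v, u \in C -> v \in C -> vadd u v \in C.

Definition tdual n (C : {set vec n}) : {set vec n} :=
  [set v | [forall u in C, tip u v == F0]].

Definition self_orth n (C : {set vec n}) : Prop := C \subset tdual C.

(* Main.v *)
Require Import Defs.
From mathcomp Require Import all_boot all_order all_algebra zify.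
Import GRing.Theory Num.Theory.
Set Implicit Arguments. Unset Strict Implicit. Unset Printing Implicit Defensive.

Lemma F4_eqE (x y : F4) : (x == y) = (F4_to_ord x == F4_to_ord y). Proof. by []. Qed.

Lemma cardF4 : #|{: F4}| = 4. Proof.
rewrite -(@eq_card _ (mem [:: F0; F1; Fw; Fw2])).
  apply/card_uniqP. rewrite /= !inE !F4_eqE /= -!val_eqE /= !inordK //.
by case; rewrite !inE ?eqxx ?orbT.
Qed.

Definition tr (x y : F4) := F4add (F4mul x (F4conj y)) (F4mul (F4conj x) y).

Lemma add0F x : F4add F0 x = x. Proof. by case: x. Qed.
Lemma addF0 x : F4add x F0 = x. Proof. by case: x. Qed.
Lemma addFC x y : F4add x y = F4add y x. Proof. by case: x; case: y. Qed.
Lemma addFA x y z : F4add x (F4add y z) = F4add (F4add x y) z.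
Proof. by case: x; case: y; case: z. Qed.
Lemma addFF x : F4add x x = F0. Proof. by case: x. Qed.
Lemma addFK x y : F4add (F4add x y) y = x. Proof. by case: x; case: y. Qed.
Lemma add4 x y z w : F4add (F4add x y) (F4add z w) = F4add (F4add x z) (F4add y w).
Proof. by case: x; case: y; case: z; case: w. Qed.
Lemma tr_addl a a' b : tr (F4add a a') b = F4add (tr a b) (tr a' b).
Proof. by case: a; case: a'; case: b. Qed.
Lemma tr_addr a b b' : tr a (F4add b b') = F4add (tr a b) (tr a b').
Proof. by case: a; case: b; case: b'. Qed.
Lemma tr_sym a b : tr a b = tr b a. Proof. by case: a; case: b. Qed.
Lemma tr_bin a b : tr a b = F0 \/ tr a b = F1. Proof. by case: a; case: b; auto. Qed.
Lemma tr0 a : tr a F0 = F0. Proof. by case: a. Qed.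
Lemma tr0l a : tr F0 a = F0. Proof. by case: a. Qed.

Section Tip.
Variable n : nat.
Implicit Types u v w : vec n.

Definition tips (s : seq 'I_n) u v := foldr F4add F0 [seq tr (u i) (v i) | i <- s].
Lemma tipE u v : tip u v = tips (enum 'I_n) u v. Proof. by []. Qed.

Lemma tip_addl u u' v : tip (vadd u u') v = F4add (tip u v) (tip u' v).
Proof.
rewrite !tipE; elim: (enum 'I_n) => [|i s IH] //; rewrite /tips /= -/(tips _ _ _).
by rewrite IH /vadd ffunE tr_addl add4.
Qed.
Lemma tip_addr u v v' : tip u (vadd v v') = F4add (tip u v) (tip u v').
Proof.
rewrite !tipE; elim: (enum 'I_n) => [|i s IH] //; rewrite /tips /= -/(tips _ _ _).
by rewrite IH /vadd ffunE tr_addr add4.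
Qed.
Lemma tip_sym u v : tip u v = tip v u.
Proof.
rewrite !tipE; elim: (enum 'I_n) => [|i s IH] //; rewrite /tips /= -/(tips _ _ _).
by rewrite IH tr_sym.
Qed.
Lemma tip_bin u v : tip u v = F0 \/ tip u v = F1.
Proof.
rewrite !tipE; elim: (enum 'I_n) => [|i s IH]; first by left. rewrite /tips /= -/(tips _ _ _).
by case: (tr_bin (u i) (v i)) => ->; case: IH => ->; auto.
Qed.
Lemma tip_neq0 u v : tip u v != F0 -> tip u v = F1.
Proof. by case: (tip_bin u v) => -> //; rewrite eqxx. Qed.
Lemma tip0l v : tip (vzero n) v = F0.
Proof.
rewrite !tipE; elim: (enum 'I_n) => [|i s IH] //; rewrite /tips /= -/(tips _ _ _).
by rewrite IH ffunE tr0l.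
Qed.

Lemma vaddK u a : vadd (vadd u a) a = u :> vec n.
Proof. by apply/ffunP => i; rewrite !ffunE addFK. Qed.
Lemma vaddKl (b t : vec n) : vadd b (vadd b t) = t.
Proof. by apply/ffunP => i; rewrite !ffunE addFA addFF add0F. Qed.
Lemma vaddC u v : vadd u v = vadd v u.
Proof. by apply/ffunP => i; rewrite !ffunE addFC. Qed.

Lemma tip_nondeg u : u != vzero n -> exists v, tip u v = F1.
Proof.
move=> nz.
have [i ui] : exists i, u i != F0.
  apply/existsP; apply: contraR nz => /existsPn h; apply/eqP/ffunP => j.
  by rewrite ffunE; move: (h j); rewrite negbK => /eqP.
pose c := match u i with F1 => Fw | _ => F1 end.
exists [ffun j => if j == i then c else F0].
have key : forall s, uniq s -> tips s u [ffun j => if j == i then c else F0] =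
   if i \in s then tr (u i) c else F0.
  elim => [|x s IH] // /andP [xs us]; rewrite /tips /= -/(tips _ _ _).
  rewrite IH // ffunE inE (eq_sym i).
  case: eqP => [<- | _] /=; last by rewrite tr0 add0F.
  by rewrite (negbTE xs) addF0.
rewrite tipE key ?enum_uniq // mem_enum /c.
by move: ui; case: (u i) => //; rewrite eqxx.
Qed.
End Tip.


Lemma sum_cardI (T : finType) (A : {set T}) (P : pred T) :
  \sum_(x in A) (P x : nat) = #|A :&: [set x | P x]|.
Proof.
rewrite -sum1_card big_mkcond [RHS]big_mkcond /=; apply: eq_bigr => x _.
by rewrite !inE; case: (x \in A); case: (P x).
Qed.

Section Dual.
Variable n : nat.
Implicit Types u v w : vec n.
Implicit Types D : {set vec n}.

Definition hperp D w := D :&: [set u | tip u w == F0].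

Lemma hperp_add D w : additive_code D -> additive_code (hperp D w).
Proof.
move=> [D0 DA]; split; first by rewrite !inE D0 tip0l eqxx.
move=> u v; rewrite !inE => /andP [uD /eqP uw] /andP [vD /eqP vw].
by rewrite DA // tip_addl uw vw eqxx.
Qed.

Lemma half_card D a w : additive_code D -> a \in D -> tip a w = F1 ->
  #|D| = 2 * #|hperp D w|.
Proof.
move=> [D0 DA] aD aw.
rewrite -(cardsID [set u | tip u w == F0] D) -/(hperp D w).
suff -> : #|D :\: [set u | tip u w == F0]| = #|hperp D w| by rewrite addnn mul2n.
have inj : injective (fun u => vadd u a) by apply: (can_inj (g:=fun u => vadd u a)) => u; apply: vaddK.
apply/eqP; rewrite eqn_leq; apply/andP; split.
- rewrite -(card_imset _ inj); apply: subset_leq_card; apply/subsetP => x /imsetP [u].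
  rewrite !inE => /andP [uw uD] ->.
  by rewrite DA // tip_addl aw (tip_neq0 uw) addFF eqxx.
- rewrite -(card_imset _ inj); apply: subset_leq_card; apply/subsetP => x /imsetP [u].
  rewrite !inE => /andP [uD /eqP uw] ->; rewrite DA // tip_addl aw uw andbT /=.
  by apply/eqP.
Qed.

Lemma dual_card D : additive_code D -> #|D| * #|tdual D| = #|{: vec n}|.
Proof.
move=> Dadd; have [D0 DA] := Dadd.
set M := #|{: vec n}|.
pose E := \sum_(u in D) \sum_(v : vec n) (tip u v == F0 : nat).
have E1 : 2 * E = M * (#|D| + 1).
  rewrite /E big_distrr /= (bigD1 (vzero n)) //=.
  have -> : \sum_v (tip (vzero n) v == F0 : nat) = M.
    rewrite -[M]sum1_card; apply: eq_bigr => v _; by rewrite tip0l eqxx.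
  have -> : \sum_(u in D | u != vzero n) 2 * (\sum_v (tip u v == F0 : nat)) =
            \sum_(u in D | u != vzero n) M.
    apply: eq_bigr => u /andP [_ nz].
    have [v0 hv0] := tip_nondeg nz.
    have Tadd : additive_code [set: vec n] by split => *; rewrite in_setT.
    have h1 : tip v0 u = F1 by rewrite tip_sym.
    rewrite /M -cardsT (half_card Tadd (in_setT v0) h1) -sum_cardI; congr (2 * _).
    by apply: eq_big => [v|v _]; rewrite ?in_setT // tip_sym.
  rewrite (eq_bigl (mem (D :\ vzero n))); last first.
    by move=> u; rewrite !inE andbC.
  rewrite sum_nat_const (cardsD1 (vzero n) D) D0; change (nat_of_bool true) with 1. move: (#|D :\ vzero n|) => c. clearbody M E. nia.
have E2 : 2 * E = M * #|D| + #|tdual D| * #|D|.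
  rewrite /E exchange_big big_distrr /=.
  transitivity (\sum_v (#|D| + (v \in tdual D) * #|D|)).
    apply: eq_bigr => v _; rewrite sum_cardI; case: (boolP (v \in tdual D)) => vT.
      rewrite inE in vT; have := forall_inP vT => h.
      suff -> : D :&: [set x | tip x v == F0] = D by rewrite mul1n addnn mul2n.
      by apply/setIidPl/subsetP => u uD; rewrite inE h.
    rewrite inE negb_forall_in in vT; case/exists_inP: vT => a aD av.
    by rewrite (half_card Dadd aD (tip_neq0 av)) mul0n addn0.
  rewrite big_split /= sum_nat_const -big_distrl /=.
  congr (_ + _); last first.
    congr (_ * _); rewrite -sum1_card [RHS]big_mkcond /=; apply: eq_bigr => v _; by case: (v \in _).
have D1 : 0 < #|D| by apply/card_gt0P; exists (vzero n).
clearbody M E; nia.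
Qed.
End Dual.


Lemma addF_eq0 x y : F4add x y = F0 -> x = y.
Proof. by case: x; case: y. Qed.

Section Greedy.
Variable n : nat.
Implicit Types u v w : vec n.
Implicit Types D B : {set vec n}.

Lemma step D B : additive_code D -> (forall b, b \in B -> b \notin tdual D) ->
  (#|B| + 1) * #|tdual D| < #|{: vec n}| ->
  exists w, #|D| = 2 * #|hperp D w| /\ forall b, b \in B -> b \notin tdual (hperp D w).
Proof.
move=> Dadd Binv Hc.
pose f (p : option (vec n) * vec n) :=
  match p.1 with None => p.2 | Some b => vadd b p.2 end.
pose dom := setX (None |: (Some @: B)) (tdual D).
have cdom : #|dom| = (#|B| + 1) * #|tdual D|.
  rewrite cardsX cardsU1 card_imset; last by move=> x y [].
  have -> : None \notin Some @: B by apply/imsetP => -[x _].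
  by rewrite addnC.
have [w wn] : exists w, w \notin f @: dom.
  apply/existsP; rewrite -negb_forall; apply/negP => /forallP h.
  have : #|{: vec n}| <= #|f @: dom|.
    by rewrite -cardsT; apply: subset_leq_card; apply/subsetP => x _; apply: h.
  by move/leq_trans/(_ (leq_imset_card _ _)); rewrite cdom leqNgt Hc.
have wT : w \notin tdual D.
  apply: contra wn => wT; apply/imsetP; exists (None, w) => //.
  by rewrite in_setX /= in_setU1 eqxx wT.
have bT : forall b, b \in B -> vadd b w \notin tdual D.
  move=> b bB; apply: contra wn => bwT; apply/imsetP; exists (Some b, vadd b w).
    by rewrite in_setX /= in_setU1 bwT andbT; apply/orP; right; apply/imsetP; exists b.
  by rewrite /f /= vaddKl.
have [a aD aw] : exists2 a, a \in D & tip a w = F1.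
  move: wT; rewrite inE negb_forall_in => /exists_inP [a aD aw].
  by exists a => //; apply: tip_neq0.
have [D0 DA] := Dadd.
exists w; split; first exact: half_card Dadd aD aw.
move=> b bB; apply/negP; rewrite inE => /forall_inP h.
have h0 : forall u, u \in D -> tip u w = F0 -> tip u b = F0.
  by move=> u uD uw; apply/eqP; apply: h; rewrite !inE uD uw eqxx.
have h1 : forall u, u \in D -> tip u w = F1 -> tip u b = tip a b.
  move=> u uD uw; apply: addF_eq0; rewrite -tip_addl; apply: h0.
    exact: DA.
  by rewrite tip_addl uw aw.
case: (tip_bin a b) => ab.
- move: (Binv b bB); rewrite inE => /forall_inP; apply => u uD.
  by case: (tip_bin u w) => uw; rewrite ?(h0 _ uD uw) ?(h1 _ uD uw) ?ab.
- move: (bT b bB); rewrite inE => /forall_inP; apply => u uD.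
  rewrite tip_addr.
  by case: (tip_bin u w) => uw; rewrite ?(h0 _ uD uw) ?(h1 _ uD uw) ?ab uw.
Qed.
End Greedy.

Section Iter.
Variable n : nat.
Lemma iter_greedy (C1 B : {set vec n}) N m : additive_code C1 -> #|C1| = 2 ^ N ->
  (forall b, b \in B -> b \notin tdual C1) ->
  (forall j, j < m -> (#|B| + 1) * 2 ^ j < 2 ^ N) ->
  forall j, j <= m -> exists D : {set vec n},
    [/\ additive_code D, D \subset C1, #|D| * 2 ^ j = 2 ^ N &
        forall b, b \in B -> b \notin tdual D].
Proof.
move=> C1add C1c C1B hyp; elim => [|j IH] jm.
  by exists C1; rewrite expn0 muln1.
have [D [Dadd DC Dc DB]] := IH (ltnW jm).
have T0 : 0 < #|tdual D|.
  apply/card_gt0P; exists (vzero n); rewrite inE; apply/forall_inP => u _.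
  by rewrite tip_sym tip0l.
have lt1 : #|B| + 1 < #|D|.
  by rewrite -(ltn_pmul2r (expn_gt0 2 j)) Dc hyp.
have Hc : (#|B| + 1) * #|tdual D| < #|{: vec n}|.
  by rewrite -(dual_card Dadd) ltn_pmul2r.
have [w [hw winv]] := step Dadd DB Hc.
exists (hperp D w); split => //.
- exact: hperp_add.
- exact: subset_trans (subsetIl _ _) DC.
- by rewrite -Dc hw expnS; lia.
Qed.
End Iter.


Section Weights.
Variable n : nat.

Lemma wcount i : #|[set v : vec n | wt v == i]| = 3 ^ i * 'C(n, i).
Proof.
rewrite -sum1_card.
rewrite (partition_big (fun v : vec n => [set j | v j != F0]) (fun S : {set 'I_n} => #|S| == i)); last first.
  by move=> v; rewrite inE.
transitivity (\sum_(S : {set 'I_n} | #|S| == i) 3 ^ i).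
  apply: eq_bigr => S /eqP Si.
  have c3 : #|predC1 F0| = 3 by rewrite cardC1 cardF4.
  rewrite -Si -{1}c3 -(card_pffun_on F0 S (predC1 F0)).
  rewrite sum1_card; apply: eq_card => v.
  rewrite !inE /wt; apply/idP/idP.
  - move=> /andP [_ /eqP <-]; apply/pffun_onP; split.
      by apply/subsetP => x; rewrite inE.
    by move=> y /mapP [x]; rewrite mem_enum inE => vx ->; rewrite inE.
  - case/pffun_onP => sub im; rewrite unfold_in /= !inE.
    have e : [set j | v j != F0] = S.
      apply/setP => x; rewrite inE; apply/idP/idP => h.
        by apply: (subsetP sub); rewrite inE.
      have : v x \in predC1 F0 by apply: im; apply: map_f; rewrite mem_enum.
      by rewrite inE.
    by rewrite e !eqxx.
rewrite sum_nat_const.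
have -> : #|[pred S : {set 'I_n} | #|S| == i]| = #|[set S : {set 'I_n} | #|S| == i]|.
  by apply: eq_card => S; rewrite inE.
by rewrite card_draws card_ord mulnC.
Qed.

Lemma wbound d : #|[set v : vec n | 0 < wt v < d]| <= \sum_(1 <= i < d) 3 ^ i * 'C(n, i).
Proof.
elim: d => [|d IH].
  by rewrite big_geq // leqn0 cards_eq0; apply/eqP/setP => v; rewrite !inE ltn0 andbF.
case: d IH => [|d] IH.
  by rewrite big_geq // leqn0 cards_eq0; apply/eqP/setP => v; rewrite !inE ltnS; case: (wt v).
rewrite big_nat_recr //= -wcount.
apply: leq_trans (leq_add IH (leqnn _)).
apply: leq_trans (leq_card_setU _ _).
apply: subset_leq_card; apply/subsetP => v; rewrite !inE => /andP [p].
rewrite ltnS leq_eqVlt => /orP [->|->]; by rewrite ?orbT ?p.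
Qed.
End Weights.

Unset Implicit Arguments.
Local Open Scope ring_scope.

Lemma wt_pos n (v : vec n) : v != vzero n -> (0 < wt v)%N.
Proof.
move=> nz; apply/card_gt0P.
have [i ui] : exists i, v i != F0.
  apply/existsP; apply: contraR nz => /existsPn h; apply/eqP/ffunP => j.
  by rewrite ffunE; move: (h j); rewrite negbK => /eqP.
by exists i; rewrite inE.
Qed.

Lemma arith b S P Q : (b <= S)%N -> (S * (2 * P - 1) < P * Q - 1)%N -> (1 <= P)%N -> (2 <= Q)%N ->
  ((b + 1) * P < P * Q)%N.
Proof. move=> h1 h2 h3 h4; nia. Qed.

Theorem mainTheorem9 (n k1 k2 d1 d : nat) (C1 : {set vec n}) :
  (1 <= n)%N -> (k1 < k2)%N -> (k2 <= n)%N ->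
  additive_code C1 -> self_orth C1 -> #|C1| = (2 ^ (n - k1))%N ->
  (forall v, v \in tdual C1 -> v != vzero n -> (d1 <= wt v)%N) ->
  (1 <= d)%N ->
  (\sum_(1 <= i < d) ((3 ^ i * 'C(n, i))%N)%:R : rat)
    < ((2 ^ (n - k1))%N%:R - 1) / ((2 ^ (k2 - k1))%N%:R - 1) ->
  exists C2 : {set vec n},
    [/\ additive_code C2, self_orth C2, C2 \subset C1, #|C2| = (2 ^ (n - k2))%N &
        forall v, v \in tdual C2 -> v != vzero n -> (minn d d1 <= wt v)%N].
Proof.
move=> hn hk12 hk2n C1add C1so C1c C1d hd hsum.
set S := (\sum_(1 <= i < d) 3 ^ i * 'C(n, i))%N.
pose B := [set v : vec n | (0 < wt v < d)%N && (v \notin tdual C1)].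
have hB : (#|B| <= S)%N.
  apply: leq_trans (wbound n d); apply: subset_leq_card; apply/subsetP => v.
  by rewrite !inE => /andP [].
have hm : (2 <= 2 ^ (k2 - k1))%N.
  by rewrite -{1}(expn1 2) leq_exp2l // subn_gt0.
have hS : (S * (2 ^ (k2 - k1) - 1) < 2 ^ (n - k1) - 1)%N.
  rewrite -natr_sum ltr_pdivlMr in hsum; last first.
    by rewrite subr_gt0 ltr1n.
  have e : forall k, ((2 ^ k)%N%:R - 1 : rat) = (2 ^ k - 1)%N%:R.
    by move=> k; rewrite natrB ?expn_gt0.
  rewrite !e in hsum.
  by rewrite -natrM ltr_nat in hsum.
set N := (n - k1)%N; set m := (k2 - k1)%N.
have m1 : (1 <= m)%N by rewrite subn_gt0.
have mN : (m <= N)%N by rewrite leq_sub2r.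
have hineq : forall j, (j < m)%N -> ((#|B| + 1) * 2 ^ j < 2 ^ N)%N.
  move=> j jm.
  have mj : (j <= m.-1)%N by rewrite -ltnS prednK.
  have eN : (2 ^ N = 2 ^ m.-1 * 2 ^ (N - m.-1))%N.
    by rewrite -expnD subnKC // (leq_trans (leq_pred m) mN).
  have em : (2 ^ m = 2 * 2 ^ m.-1)%N by rewrite -expnS prednK.
  have hQ : (2 <= 2 ^ (N - m.-1))%N.
    by rewrite -{1}(expn1 2) leq_exp2l // subn_gt0 (leq_trans _ mN) // prednK.
  apply: (leq_ltn_trans (leq_mul (leqnn _) (leq_pexp2l (isT : (0 < 2)%N) mj))).
  rewrite eN; apply: (arith _ _ _ _ hB) => //; first by rewrite -em -eN.
  by rewrite expn_gt0.
have Binv : forall b, b \in B -> b \notin tdual C1.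
  by move=> b; rewrite inE => /andP [].
have [D [Dadd DC Dc DB]] := iter_greedy C1add C1c Binv hineq (leqnn m).
have Dcard : #|D| = (2 ^ (n - k2))%N.
  apply/eqP; rewrite -(eqn_pmul2r (expn_gt0 2 m)) Dc -expnD; apply/eqP; congr (expn 2 _).
  rewrite /N /m; lia.
exists D; split => //.
- apply/subsetP => u uD; rewrite inE; apply/forall_inP => x xD.
  have := subsetP C1so u (subsetP DC u uD); rewrite inE => /forall_inP; apply.
  exact: subsetP DC x xD.
- move=> v vT nz.
  case: (boolP (v \in tdual C1)) => vC1.
    by apply: leq_trans (geq_minr _ _) (C1d v vC1 nz).
  apply: leq_trans (geq_minl _ _) _; rewrite leqNgt; apply/negP => vd.
  have : v \in B by rewrite inE vC1 wt_pos // vd.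
  by move/DB; rewrite vT.
Qed.
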